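(* Let $I\subsetneq\Delta_\sigma$ be $\lambda_\iota$-connected. Then $I_\iota(I)$ is $\lambda_\iota$-connected. More generally, every $J\subset\Delta_\sigma$ with $J\supset I_\iota(I)$ is $\lambda_\iota$-connected.
   Context: Setting. - $G$ is a connected noncompact semisimple real Lie group with finite center, $\iota:G\to\mathrm{GL}(W)$ is an almost faithful finite-dimensional real representation irreducible over $\mathbb R$, $\sigma$ an involution of $G$, and $H$ a symmetric subgroup for $\sigma$ fixing a nonzero $v_0\in W$. - $\theta$ is a Cartan involution commuting with $\sigma$, $\mathfrak g=\mathfrak k\oplus\mathfrak p=\mathfrak h\oplus\mathfrak q$ the eigenspace decompositions, and $\mathfrak a$ a maximal abelian subspace of $\mathfrak p\cap\mathfrak q$. - $\Sigma_\sigma$ is the restricted root system with root spaces $\mathfrak g_\alpha$, positive roots $\Sigma^+_\sigma$ and simple roots $\Delta_\sigma$. - $2\rho=\sum_{\alpha\in\Sigma_\sigma^+}(\dim\mathfrak g_\alpha)\alpha=\sum_{\alpha\in\Delta_\sigma}u_\alpha\alpha$, and $\lambda_\iota=\sum_{\alpha\in\Delta_\sigma}m_\alpha\alpha$ is the highest weight of $\mathfrak a$ on $W$ (all $u_\alpha,m_\alpha>0$). - $I\subset\Delta_\sigma$ is $\lambda_\iota$-connected if $I\cup\{\lambda_\iota\}$ is not a union of two nonempty subsets orthogonal for the Killing form. - For $\lambda_\iota$-connected $I\subsetneq\Delta_\sigma$: $a_\iota(I)=\max\{u_\alpha/m_\alpha:\alpha\in\Delta_\sigma\setminus I\}$ and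 $I_\iota(I)=I\cup\{\alpha\in\Delta_\sigma\setminus I:u_\alpha/m_\alpha<a_\iota(I)\}$. *)

(* Defs.v *)
From HB Require Import structures.
From mathcomp Require Import all_boot all_order all_algebra.
Set Implicit Arguments. Unset Strict Implicit. Unset Printing Implicit Defensive.
Import Order.TTheory GRing.Theory Num.Theory.
Local Open Scope ring_scope.

Section Defs.
Variables (R : realFieldType) (n r : nat).

(* the (positive definite) inner product on a^* induced by the Killing form,
   written in an orthonormal basis *)
Definition dot (x y : 'rV[R]_n) : R := (x *m y^T) 0 0.

Definition refl (a b : 'rV[R]_n) : 'rV[R]_n :=
  b - ((2 * dot b a) / dot a a) *: a.

(* a (possibly non-reduced) crystallographic root system *)
Definition is_root_system (S : seq 'rV[R]_n) : Prop :=
  [/\ uniq S, (0 : 'rV[R]_n) \notin S,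
      (forall a b, a \in S -> b \in S -> refl a b \in S) &
      (forall a b, a \in S -> b \in S ->
         exists k : int, (2 * dot b a) / dot a a = k%:~R)].

Definition is_base (S : seq 'rV[R]_n) (Delta : 'I_r -> 'rV[R]_n) : Prop :=
  [/\ (forall i, Delta i \in S),
      row_free (\matrix_(i < r) Delta i) &
      (forall b, b \in S -> exists c : 'I_r -> int,
          b = \sum_i (c i)%:~R *: Delta i /\
          ((forall i, 0 <= c i) \/ (forall i, c i <= 0)))].

Definition is_positive_system (S Splus : seq 'rV[R]_n)
    (Delta : 'I_r -> 'rV[R]_n) : Prop :=
  uniq Splus /\
  forall b, b \in Splus <->
    (b \in S /\ exists c : 'I_r -> R,
        (forall i, 0 <= c i) /\ b = \sum_i c i *: Delta i).

Definition lam_connected (Delta : 'I_r -> 'rV[R]_n) (lam : 'rV[R]_n)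
    (J : {set 'I_r}) : Prop :=
  let X := fun v => v = lam \/ exists2 i, i \in J & v = Delta i in
  ~ (exists A B : 'rV[R]_n -> Prop,
       [/\ (exists x, A x), (exists y, B y),
           (forall v, X v <-> (A v \/ B v)) &
           (forall a b, A a -> B b -> dot a b = 0)]).

(* a_iota(I) = max { u_a / m_a : a in Delta \ I }  (all ratios are > 0, and
   the index set is nonempty when I is a proper subset) *)
Definition a_iota (u m : 'I_r -> R) (I : {set 'I_r}) : R :=
  \big[Num.max/0]_(i | i \notin I) (u i / m i).

Definition I_iota (u m : 'I_r -> R) (I : {set 'I_r}) : {set 'I_r} :=
  I :|: [set i | (i \notin I) && (u i / m i < a_iota u m I)].

End Defs.

(* Main.v *)
Require Import Defs.
From HB Require Import structures.
From mathcomp Require Import all_boot all_order all_algebra.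
From mathcomp Require Import lra.
From Stdlib Require Import ClassicalEpsilon Classical.
Import Order.TTheory GRing.Theory Num.Theory.
Local Open Scope ring_scope.

Section Aux.
Variables (R : realFieldType) (n r : nat).
Implicit Types (x y z : 'rV[R]_n).

Lemma dot_sum x y : dot x y = \sum_k x 0 k * y 0 k.
Proof. by rewrite /dot mxE; apply: eq_bigr => k _; rewrite mxE. Qed.

Lemma dotC x y : dot x y = dot y x.
Proof. by rewrite !dot_sum; apply: eq_bigr => k _; rewrite mulrC. Qed.

Lemma dotDl x y z : dot (x + y) z = dot x z + dot y z.
Proof. by rewrite !dot_sum -big_split; apply: eq_bigr => k _; rewrite mxE mulrDl. Qed.

Lemma dotZl (a : R) x y : dot (a *: x) y = a * dot x y.
Proof. by rewrite !dot_sum mulr_sumr; apply: eq_bigr => k _; rewrite mxE mulrA. Qed.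

Lemma dot0l y : dot 0 y = 0.
Proof. by rewrite -(scale0r 0) dotZl mul0r. Qed.

Lemma dotNl x y : dot (- x) y = - dot x y.
Proof. by rewrite -scaleN1r dotZl mulN1r. Qed.

Lemma dotBl x y z : dot (x - y) z = dot x z - dot y z.
Proof. by rewrite dotDl dotNl. Qed.

Lemma dotDr x y z : dot z (x + y) = dot z x + dot z y.
Proof. by rewrite !(dotC z) dotDl. Qed.

Lemma dotZr (a : R) x y : dot y (a *: x) = a * dot y x.
Proof. by rewrite !(dotC y) dotZl. Qed.

Lemma dot_suml (I : Type) (s : seq I) (P : pred I) (F : I -> 'rV[R]_n) y :
  dot (\sum_(i <- s | P i) F i) y = \sum_(i <- s | P i) dot (F i) y.
Proof. exact: (big_morph (fun x => dot x y) (fun a b => dotDl a b y) (dot0l y)). Qed.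

Lemma dot_sumr (I : Type) (s : seq I) (P : pred I) (F : I -> 'rV[R]_n) y :
  dot y (\sum_(i <- s | P i) F i) = \sum_(i <- s | P i) dot y (F i).
Proof. rewrite dotC dot_suml; apply: eq_bigr => i _; exact: dotC. Qed.

Lemma dot_ge0 x : 0 <= dot x x.
Proof. rewrite dot_sum; apply: sumr_ge0 => k _; by rewrite -expr2 sqr_ge0. Qed.

Lemma dot_eq0 x : dot x x = 0 -> x = 0.
Proof.
rewrite dot_sum => /eqP; rewrite psumr_eq0 => [/allP H|k _]; last by rewrite -expr2 sqr_ge0.
apply/rowP => k; rewrite mxE; have := H k (mem_index_enum k).
by rewrite /= mulf_eq0 orbb => /eqP.
Qed.

Lemma coef_uniq (Delta : 'I_r -> 'rV[R]_n) :
  row_free (\matrix_(i < r) Delta i) ->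
  forall c c' : 'I_r -> R, \sum_i c i *: Delta i = \sum_i c' i *: Delta i ->
  forall k, c k = c' k.
Proof.
move=> hf c c' E k.
have key : forall d : 'I_r -> R,
  (\row_i d i) *m (\matrix_(i < r) Delta i) = \sum_i d i *: Delta i.
  move=> d; rewrite mulmx_sum_row; apply: eq_bigr => i _.
  by rewrite rowK mxE.
have := key c; rewrite E -key => /(row_free_inj hf) /rowP /(_ k).
by rewrite !mxE.
Qed.

Lemma sum_delta (Delta : 'I_r -> 'rV[R]_n) (i : 'I_r) (t : R) :
  \sum_l (t * (l == i)%:R) *: Delta l = t *: Delta i.
Proof.
rewrite (bigD1 i) //= eqxx mulr1 big1 ?addr0 // => l /negPf ->.
by rewrite mulr0 scale0r.
Qed.

Lemma sum_coefB (Delta : 'I_r -> 'rV[R]_n) (c : 'I_r -> R) (i : 'I_r) (t : R) :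
  \sum_l (c l - t * (l == i)%:R) *: Delta l = \sum_l c l *: Delta l - t *: Delta i.
Proof.
rewrite -sum_delta -sumrB; apply: eq_bigr => l _; by rewrite scalerBl.
Qed.


Definition pb (P : Prop) : bool := if excluded_middle_informative P then true else false.
Lemma pbP (P : Prop) : reflect P (pb P).
Proof. by rewrite /pb; case: excluded_middle_informative => h; constructor. Qed.

Lemma refl_dot x y : dot y y != 0 -> dot (refl y x) y = - dot x y.
Proof.
move=> h; rewrite /refl dotBl dotZl -mulrA mulVf // mulr1; lra.
Qed.

Lemma refl_invol y x : dot y y != 0 -> refl y (refl y x) = x.
Proof.
move=> h; rewrite {1}/refl refl_dot // mulrN mulNr scaleNr opprK /refl subrK //.
Qed.

Lemma refl_self y (t : R) : dot y y != 0 -> refl y (t *: y) = (- t) *: y.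
Proof.
move=> h; rewrite /refl dotZl mulrA -mulrA mulfV // mulr1.
by rewrite -scalerBl; congr (_ *: _); lra.
Qed.

Section Roots.
Variables (Sigma Splus : seq 'rV[R]_n) (Delta : 'I_r -> 'rV[R]_n)
  (mult : 'rV[R]_n -> nat).
Hypotheses (hRS : is_root_system Sigma) (hB : is_base Sigma Delta)
  (hP : is_positive_system Sigma Splus Delta)
  (hm : forall a, a \in Sigma -> (0 < mult a)%N)
  (hmr : forall a b, a \in Sigma -> b \in Sigma -> mult (refl a b) = mult b).

Lemma Delta_neq0 i : Delta i != 0.
Proof.
case: hRS => _ h0 _ _; case: hB => hD _ _.
by apply/eqP => e; move: (hD i); rewrite e (negPf h0).
Qed.

Lemma dotDD_gt0 i : 0 < dot (Delta i) (Delta i).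
Proof.
rewrite lt_def dot_ge0 andbT; apply/eqP => /dot_eq0 /eqP.
by rewrite (negPf (Delta_neq0 i)).
Qed.

Lemma dotDD_neq0 i : dot (Delta i) (Delta i) != 0.
Proof. by rewrite gt_eqF // dotDD_gt0. Qed.

Lemma simple_dot_le0 i j : i != j -> dot (Delta j) (Delta i) <= 0.
Proof.
move=> hij; rewrite leNgt; apply/negP => hpos.
case: hRS => _ _ hrefl _; case: hB => hD hf hbase.
set k := 2 * dot (Delta j) (Delta i) / dot (Delta i) (Delta i).
have kpos : 0 < k by apply: divr_gt0; [apply: mulr_gt0 | apply: dotDD_gt0].
have hs := hrefl _ _ (hD i) (hD j).
have [e [he hsg]] := hbase _ hs.
have E : \sum_l ((1 * (l == j)%:R) - k * (l == i)%:R) *: Delta l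
         = \sum_l (e l)%:~R *: Delta l.
  by rewrite sum_coefB sum_delta scale1r -he.
have Ei := coef_uniq _ hf _ _ E i; have Ej := coef_uniq _ hf _ _ E j.
move: Ei Ej; rewrite !eqxx (negPf hij) eq_sym (negPf hij) /= => Ei Ej.
case: hsg => hsg.
- have := hsg i; rewrite -(ler0z R) -Ei; move=> ?; lra.
- have := hsg j; rewrite -(lerz0 R) -Ej; move=> ?; lra.
Qed.

Lemma Delta_pos i : Delta i \in Splus.
Proof.
case: hP => _ hP'; apply/hP'; split; first by case: hB.
exists (fun l => 1 * (l == i)%:R); split; first by move=> l; rewrite mul1r ler0n.
by rewrite sum_delta scale1r.
Qed.

Definition rho2 := \sum_(a <- Splus) (mult a)%:R *: a.

Lemma rho_pos i : 0 < dot rho2 (Delta i).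
Proof.
case: hRS => _ _ hrefl _; case: hB => hD hf hbase.
have hPu := hP.1; have hP' := hP.2.
set M := fun a => pb (exists t, a = t *: Delta i).
set f := fun a => (mult a)%:R * dot a (Delta i).
set s := refl (Delta i).
have sK : cancel s s by move=> x; apply: refl_invol; apply: dotDD_neq0.
rewrite /rho2 dot_suml (eq_bigr f); last by move=> a _; rewrite dotZl.
rewrite (bigID M) /=.
have -> : \sum_(a <- Splus | ~~ M a) f a = 0.
  rewrite -big_filter; set L := filter _ Splus.
  have Lu : uniq L by apply: filter_uniq.
  have hL : forall a, a \in L -> s a \in L /\ f (s a) = - f a.
    move=> a; rewrite mem_filter => /andP [/pbP hnM haS].
    have [haSig [c [c0 ha]]] := (hP' a).1 haS.
    have [j [hji hcj]] : exists j, j != i /\ c j != 0.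
      apply: NNPP => H; apply: hnM; exists (c i).
      rewrite ha (bigD1 i) //= big1 ?addr0 // => j hj.
      case: (eqVneq (c j) 0) => [->|hcj]; first by rewrite scale0r.
      by exfalso; apply: H; exists j.
    have hsS : s a \in Sigma by apply: hrefl.
    have [e [he hsg]] := hbase _ hsS.
    set k := 2 * dot a (Delta i) / dot (Delta i) (Delta i).
    have E : \sum_l (c l - k * (l == i)%:R) *: Delta l = \sum_l (e l)%:~R *: Delta l.
      by rewrite sum_coefB -ha -he.
    have Ej := coef_uniq _ hf _ _ E j; move: Ej; rewrite (negPf hji) mulr0 subr0 => Ej.
    have cjpos : 0 < c j by rewrite lt_def hcj c0.
    have e0 : forall l, 0 <= e l.
      case: hsg => // hsg; exfalso; have := hsg j; rewrite -(lerz0 R) -Ej; lra.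
    split.
    - rewrite mem_filter; apply/andP; split.
      + apply/negP => /pbP [t ht]; apply: hnM; exists (- t).
        by rewrite -(sK a) ht /s refl_self // dotDD_neq0.
      + apply/hP'; split => //; exists (fun l => (e l)%:~R); split => //.
        by move=> l; rewrite ler0z.
    - rewrite /f /s hmr // refl_dot ?dotDD_neq0 //; lra.
  have Lsub : {subset map s L <= L}.
    by move=> x /mapP [a ha ->]; case: (hL a ha).
  have mLu : uniq (map s L) by rewrite map_inj_uniq //; exact: can_inj sK.
  have [_ Leq] := uniq_min_size mLu Lsub (eq_leq (esym (size_map s L))).
  have Pm := uniq_perm mLu Lu Leq.
  have : \sum_(a <- L) f a = - \sum_(a <- L) f a.
    rewrite -{1}(perm_big _ Pm) big_map -sumrN; apply: eq_big_seq => a ha.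
    by case: (hL a ha).
  move=> ?; lra.
rewrite addr0 -big_filter; set L2 := filter _ Splus.
have hi : Delta i \in L2.
  rewrite mem_filter Delta_pos andbT; apply/pbP; exists 1; by rewrite scale1r.
rewrite (bigD1_seq (Delta i)) ?filter_uniq //=.
have h1 : 0 < f (Delta i).
  by apply: mulr_gt0; [rewrite ltr0n; apply: hm; apply: hD | apply: dotDD_gt0].
have h2 : 0 <= \sum_(a <- L2 | a != Delta i) f a.
  rewrite big_seq_cond; apply: sumr_ge0 => a /andP [ha _].
  move: ha; rewrite mem_filter => /andP [/pbP [t ht] haS].
  have [haSig [c [c0 ha]]] := (hP' a).1 haS.
  have E : \sum_l c l *: Delta l = \sum_l (t * (l == i)%:R) *: Delta l.
    by rewrite sum_delta -ht -ha.
  have := coef_uniq _ hf _ _ E i; rewrite eqxx mulr1 => ci.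
  rewrite /f ht dotZl; apply: mulr_ge0; first exact: ler0n.
  by apply: mulr_ge0; [rewrite -ci | apply: dot_ge0].
lra.
Qed.


Section Main.
Variables (lam : 'rV[R]_n) (u m : 'I_r -> R) (I J : {set 'I_r}).
Hypotheses (hrho : rho2 = \sum_i u i *: Delta i) (hu : forall i, 0 < u i)
  (hlam : lam = \sum_i m i *: Delta i) (hmpos : forall i, 0 < m i)
  (hprop : I \proper [set: 'I_r]) (Icon : lam_connected Delta lam I)
  (hsub : I_iota u m I \subset J).

Lemma core (A B : 'rV[R]_n -> Prop) :
  A lam -> (exists y, B y) ->
  (forall v, (v = lam \/ exists2 i, i \in J & v = Delta i) <-> (A v \/ B v)) ->
  (forall a b, A a -> B b -> dot a b = 0) -> False.
Proof.
move=> Al [y By] hX horth.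
case: hB => hD hf hbase.
have hIJ : I \subset J by apply: subset_trans hsub; apply: subsetUl.
have notBI : forall i, i \in I -> ~ B (Delta i).
  move=> i hi Bi; apply: Icon.
  exists (fun v => (v = lam \/ exists2 i, i \in I & v = Delta i) /\ A v).
  exists (fun v => (v = lam \/ exists2 i, i \in I & v = Delta i) /\ B v).
  split.
  - by exists lam; split => //; left.
  - by exists (Delta i); split => //; right; exists i.
  - move=> v; split.
    + move=> hv; have : A v \/ B v.
        apply/hX; case: hv => [->|[j hj ->]]; [by left | right; exists j => //].
        exact: (subsetP hIJ).
      by case=> h; [left | right].
    + by case=> [][].
  - by move=> a b [_ ha] [_ hb]; apply: horth.
have [k0 _ _] : exists2 k : 'I_r, k \in [set: 'I_r] & k \notin I.
  by case/properP: hprop.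
have [j0 hj0 Bj0] : exists2 j, j \in J & B (Delta j).
  have := (hX y).2 (or_intror By); case=> [ey|[j hj ey]].
  - exfalso; have := horth _ _ Al By; rewrite ey => /dot_eq0 l0.
    have E : \sum_i m i *: Delta i = \sum_i 0 *: Delta i.
      by rewrite -hlam l0 big1 // => i _; rewrite scale0r.
    have := coef_uniq _ hf _ _ E k0; have := hmpos k0; lra.
  - by exists j => //; rewrite -ey.
set a := a_iota u m I.
have hle : forall j, j \notin I -> u j / m j <= a.
  by move=> j hj; rewrite /a /a_iota; apply: (le_bigmax_cond _ (P := fun i => i \notin I)).
have hge : forall j, j \notin J -> a * m j <= u j.
  move=> j hj; have : j \notin I_iota u m I.
    by apply/negP => h; move/negP: hj; apply; apply: (subsetP hsub).
  rewrite /I_iota in_setU in_set negb_or => /andP [hI].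
  rewrite hI /= -leNgt => h; by rewrite -ler_pdivlMr.
set inC := fun j => (j \in J) && pb (B (Delta j)).
set e := fun j => if inC j then a * m j - u j else 0.
have e0 : forall j, 0 <= e j.
  move=> j; rewrite /e; case hc: (inC j) => //.
  move: hc => /andP [_ /pbP hBj].
  have hjI : j \notin I by apply/negP => hi; exact: notBI hi hBj.
  have := hle j hjI; rewrite ler_pdivrMr // mulrC => ?; lra.
set D := \sum_j e j *: Delta j.
have bound : forall i, inC i -> dot rho2 (Delta i) <= - dot D (Delta i).
  move=> i /andP [hiJ /pbP hBi].
  have hl0 : dot lam (Delta i) = 0 by apply: horth.
  have -> : - dot D (Delta i) = \sum_j (a * m j - e j) * dot (Delta j) (Delta i).
    have -> : - dot D (Delta i) = a * dot lam (Delta i) - dot D (Delta i).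
      by rewrite hl0 mulr0 add0r.
    rewrite hlam /D !dot_suml mulr_sumr -sumrB; apply: eq_bigr => j _.
    by rewrite !dotZl mulrBl mulrA.
  rewrite hrho dot_suml; apply: ler_sum => j _; rewrite dotZl.
  rewrite /e; case hc: (inC j).
  - by rewrite opprB addrC subrK.
  - rewrite subr0; case hjJ: (j \in J).
    + have nBj : ~ B (Delta j) by move=> hb; move: hc; rewrite /inC hjJ /=; move/pbP: hb => ->.
      have : A (Delta j) \/ B (Delta j) by apply/hX; right; exists j.
      case=> // hAj; by rewrite (horth _ _ hAj hBi) !mulr0.
    + have hij : i != j by apply/eqP => eij; move: hjJ; rewrite -eij hiJ.
      have hA : dot (Delta j) (Delta i) <= 0 by apply: simple_dot_le0.
      have := hge j (negbT hjJ) => ?; nra.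
have hsum : \sum_i e i * dot rho2 (Delta i) <= - dot D D.
  have -> : - dot D D = \sum_i e i * (- dot D (Delta i)).
    rewrite {2}/D dot_sumr -sumrN; apply: eq_bigr => i _; by rewrite dotZr mulrN.
  apply: ler_sum => i _; rewrite /e; case hc: (inC i); last by rewrite !mul0r.
  apply: ler_wpM2l; first by have := e0 i; rewrite /e hc.
  exact: bound.
have hs0 : 0 <= \sum_i e i * dot rho2 (Delta i).
  by apply: sumr_ge0 => i _; apply: mulr_ge0 => //; apply: ltW; apply: rho_pos.
have D0 : D = 0 by apply: dot_eq0; have := dot_ge0 D; lra.
have hc0 : inC j0 by rewrite /inC hj0; apply/pbP.
have := bound j0 hc0; rewrite D0 dot0l oppr0 => h.
have := rho_pos j0; lra.
Qed.

End Main.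
End Roots.
End Aux.

Theorem proposition5p2 (R : realFieldType) (n r : nat)
  (Sigma Splus : seq 'rV[R]_n) (Delta : 'I_r -> 'rV[R]_n)
  (mult : 'rV[R]_n -> nat) (lam : 'rV[R]_n) (u m : 'I_r -> R)
  (I : {set 'I_r}) :
  is_root_system Sigma ->
  is_base Sigma Delta ->
  is_positive_system Sigma Splus Delta ->
  (forall a, a \in Sigma -> (0 < mult a)%N) ->
  (forall a b, a \in Sigma -> b \in Sigma -> mult (refl a b) = mult b) ->
  \sum_(a <- Splus) (mult a)%:R *: a = \sum_i u i *: Delta i ->
  (forall i, 0 < u i) ->
  lam = \sum_i m i *: Delta i ->
  (forall i, 0 < m i) ->
  (forall i, 0 <= dot lam (Delta i)) ->
  I \proper [set: 'I_r] ->
  lam_connected Delta lam I ->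
  lam_connected Delta lam (I_iota u m I) /\
  (forall J : {set 'I_r}, I_iota u m I \subset J -> lam_connected Delta lam J).
Proof.
move=> hRS hB hP hm hmr hrho hu hlam hmpos _ hprop Icon.
have main : forall J : {set 'I_r}, I_iota u m I \subset J -> lam_connected Delta lam J.
  move=> J hsub; rewrite /lam_connected /= => -[A [B [[x Ax] [y By] hX horth]]].
  have core' := @core _ _ _ _ _ _ _ hRS hB hP hm hmr lam u m I J hrho hlam hmpos hprop Icon hsub.
  case: ((hX lam).1 (or_introl erefl)) => hl.
  - exact: (core' A B hl (ex_intro _ y By) hX horth).
  - apply: (core' B A hl (ex_intro _ x Ax)).
    + by move=> v; rewrite hX; split; case; auto.
    + by move=> a b hb ha; rewrite dotC; apply: horth.
split; last exact: main.
exact: main.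
Qed.
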